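(* In the publishing problem, assume the delay cost is global (a single non-negative function $C^{(d)}$), the gas price is constant, i.e. $R(P)=P$ with probability $1$ and $P_t=P$ for all $t$, and the publishing cost is constant, $C^{(p)}_t(N)=\beta\,\mathbb{1}[N\neq\emptyset]$. Then an optimal policy is to publish all pending transactions at constant intervals of length $n^*$ (i.e. consecutive publication steps are $n^*$ steps apart), where $$n^*\in\arg\min_{n\ge1}\frac{F^{(d)}(n)+\gamma^{n-1}\beta P}{1-\gamma^n}.$$
   Context: The publishing problem is the following infinite-horizon MDP in discrete time $t=0,1,2,\dots$. At each step $t$ a new transaction $H_t$ is created. The state at time $t$ is $(t,P_t,Q_t)$ with gas price $P_t\ge0$ and set $Q_t$ of unpublished transactions ($Q_0=\emptyset$). A policy $\pi$ chooses $N^\pi_t\subseteq Q_t$ to publish, incurring cost $C_t=P_t\,C^{(p)}_t(N^\pi_t)+C^{(d)}_t(Q_t\setminus N^\pi_t)$; then $Q_{t+1}=(Q_t\setminus N^\pi_t)\cup\{H_t\}$ and $P_{t+1}=R(P_t)$ for a random function $R$. Publishing cost: $C^{(p)}_t(N)=\alpha|N|+\beta\,\mathbb{1}[N\ne\emptyset]$, $\alpha,\beta\ge0$ (here $\alpha=0$). Delay cost: $C^{(d)}_t(N)=\sum_{H_\tau\in N}C^{(d)}_{H_\tau}(t-\tau)$ with non-negative functions $C^{(d)}_{H_\tau}$; it is global if all $C^{(d)}_{H_\tau}$ equal one function $C^{(d)}$. The expected total cost is $C(\pi)=\mathbb{E}[\sum_t\gamma^tC_t]$ with $0<\gamma<1$,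 and a policy is optimal if it minimizes $C(\pi)$. The aggregated delay cost is $F^{(d)}(n)=\sum_{t=1}^{n-1}\sum_{i=1}^{t}\gamma^{t-1}C^{(d)}(i)$. *)

(* Defs.v *)
From HB Require Import structures.
From mathcomp Require Import all_boot all_order all_algebra.
From mathcomp Require Import all_classical all_reals all_analysis.
Set Implicit Arguments. Unset Strict Implicit. Unset Printing Implicit Defensive.
Import Order.TTheory GRing.Theory Num.Theory.
Local Open Scope ring_scope.

(* Transactions are identified by their creation time: H_tau is tau.
   In the constant-price setting the dynamics are deterministic, so a
   (Markov, deterministic) policy maps the state (t, Q_t) to a set N_t;
   the published set is clamped to N_t ∩ Q_t so that N_t ⊆ Q_t always. *)
Definition policy := nat -> (nat -> bool) -> (nat -> bool).

Fixpoint queue (pi : policy) (t : nat) : nat -> bool :=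
  match t with
  | 0 => fun _ => false
  | t'.+1 => let Q := queue pi t' in
             fun tau => (Q tau && ~~ (pi t' Q tau && Q tau)) || (tau == t')
  end.

Definition published (pi : policy) (t : nat) : nat -> bool :=
  fun tau => pi t (queue pi t) tau && queue pi t tau.

(* stage cost C_t = P * beta * 1[N_t <> ∅] + sum_{H_tau in Q_t \ N_t} Cd (t - tau).
   Note Q_t ⊆ {0,...,t-1}. *)
Definition stage_cost {R : realType} (P beta : R) (Cd : nat -> R)
    (pi : policy) (t : nat) : R :=
  P * (beta * ([exists tau : 'I_t, published pi t tau] : bool)%:R)
  + \sum_(0 <= tau < t | queue pi t tau && ~~ published pi t tau) Cd (t - tau)%N.

Definition total_cost {R : realType} (gamma P beta : R) (Cd : nat -> R)
    (pi : policy) : \bar R :=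
  (\sum_(0 <= t <oo) ((gamma ^+ t * stage_cost P beta Cd pi t)%:E))%E.

Definition periodic_policy (n : nat) : policy :=
  fun t Q => if (n %| t)%N then Q else (fun _ => false).

Definition F_delay {R : realType} (gamma : R) (Cd : nat -> R) (n : nat) : R :=
  \sum_(1 <= t < n) \sum_(1 <= i < t.+1) gamma ^+ t.-1 * Cd i.

Definition objective {R : realType} (gamma P beta : R) (Cd : nat -> R) (n : nat) : R :=
  (F_delay gamma Cd n + gamma ^+ n.-1 * beta * P) / (1 - gamma ^+ n).

(* Main.v *)
Require Import Defs.
From HB Require Import structures.
From mathcomp Require Import all_boot all_order all_algebra.
From mathcomp Require Import all_classical all_reals all_analysis.
From mathcomp Require Import lra zify.
Import Order.TTheory GRing.Theory Num.Theory.
Local Open Scope ring_scope.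

Section Aux.
Import numFieldNormedType.Exports.
Local Open Scope classical_set_scope.
Definition Dsum {R : realType} (Cd : nat -> R) (a : nat) : R :=
  \sum_(1 <= i < a.+1) Cd i.

Lemma F_rec {R : realType} (gamma : R) Cd a : (1 <= a)%N ->
  F_delay gamma Cd a.+1 = F_delay gamma Cd a + gamma ^+ a.-1 * Dsum Cd a.
Proof. by move=> ha; rewrite /F_delay big_nat_recr //= /Dsum mulr_sumr. Qed.

Lemma F1 {R : realType} (gamma : R) Cd : F_delay gamma Cd 1 = 0.
Proof. by rewrite /F_delay big_geq. Qed.

Lemma Dsum_ge0 {R : realType} (Cd : nat -> R) a : (forall i, 0 <= Cd i) -> 0 <= Dsum Cd a.
Proof. by move=> h; rewrite /Dsum; apply: sumr_ge0 => i _. Qed.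

Lemma F_mono {R : realType} (gamma : R) Cd a b : 0 <= gamma -> (forall i, 0 <= Cd i) ->
  (a <= b)%N -> F_delay gamma Cd a <= F_delay gamma Cd b.
Proof.
move=> g0 hC; elim: b => [|b IH]; first by rewrite leqn0 => /eqP ->.
rewrite leq_eqVlt => /orP[/eqP -> //|]; rewrite ltnS => hab.
apply: (le_trans (IH hab)).
case: b {IH hab} => [|b]; first by rewrite F1 /F_delay big_geq.
rewrite [X in _ <= X]F_rec // lerDl; apply: mulr_ge0; [exact: exprn_ge0|exact: Dsum_ge0].
Qed.

Lemma sum_window {R : realType} (Cd : nat -> R) p N : (p <= N)%N ->
  \sum_(0 <= tau < N | (p <= tau)%N) Cd (N - tau)%N = Dsum Cd (N - p).
Proof.
move=> hpN; rewrite (@big_cat_nat _ _ _ p 0 N) //=.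
rewrite big_nat_cond big1 ?add0r; last first.
  by move=> i /andP[/andP[_ h1] h2]; exfalso; lia.
rewrite big_nat_cond (eq_bigl (fun i => (p <= i < N)%N)); last first.
  by move=> i; apply/andP/idP => [[]//|h]; split => //; case/andP: h.
rewrite -big_nat big_nat_rev -{1}(add0n p) big_addn /Dsum big_add1 /=.
apply: eq_big_nat => i hi; congr Cd; lia.
Qed.

Lemma queueS (pi : policy) t tau :
  queue pi t.+1 tau = (queue pi t tau && ~~ published pi t tau) || (tau == t).
Proof. by []. Qed.
Definition Spart {R : realType} (gamma P beta : R) Cd pi N :=
  \sum_(0 <= t < N) gamma ^+ t * stage_cost P beta Cd pi t.

Lemma stage_ge0 {R : realType} (P beta : R) Cd pi t : 0 <= P -> 0 <= beta ->
  (forall i, 0 <= Cd i) -> 0 <= stage_cost P beta Cd pi t.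
Proof.
move=> hP hb hC; rewrite /stage_cost; apply: addr_ge0.
  by apply: mulr_ge0 => //; apply: mulr_ge0.
by apply: sumr_ge0 => i _.
Qed.

Lemma Spart_ge0 {R : realType} (gamma P beta : R) Cd pi N : 0 <= gamma -> 0 <= P -> 0 <= beta ->
  (forall i, 0 <= Cd i) -> 0 <= Spart gamma P beta Cd pi N.
Proof.
move=> hg hP hb hC; apply: sumr_ge0 => i _; apply: mulr_ge0; first exact: exprn_ge0.
exact: stage_ge0.
Qed.

Lemma lower_inv {R : realType} (gamma P beta c : R) Cd (pi : policy) :
  0 < gamma -> 0 <= P -> 0 <= beta -> (forall i, 0 <= Cd i) ->
  (forall a, (1 <= a)%N -> c * (1 - gamma ^+ a) <=
      F_delay gamma Cd a + gamma ^+ a.-1 * beta * P) ->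
  forall N, exists p, [/\ (p < N.+1)%N,
    (forall tau, (p <= tau < N.+1)%N -> queue pi N.+1 tau) &
    gamma * c * (1 - gamma ^+ p) + gamma ^+ p.+1 * F_delay gamma Cd (N.+1 - p)
      <= Spart gamma P beta Cd pi N.+1].
Proof.
move=> g0 hP hb hC hg; elim=> [|N [p [hp hQ hS]]].
  exists 0%N; split => //.
    by move=> tau /andP[_]; rewrite ltnS leqn0 => /eqP ->.
  rewrite expr0 subrr mulr0 add0r subn0 F1 mulr0.
  by apply: Spart_ge0 => //; apply: ltW.
set M := N.+1 in hp hQ hS *.
have SM : Spart gamma P beta Cd pi M.+1 =
   Spart gamma P beta Cd pi M + gamma ^+ M * stage_cost P beta Cd pi M.
  by rewrite /Spart big_nat_recr.
set a := (M - p)%N.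
have ha : (1 <= a)%N by rewrite /a; lia.
have eM : gamma ^+ M = gamma ^+ p * gamma * gamma ^+ a.-1.
  by rewrite -exprSr -exprD; congr (_ ^+ _); rewrite /a; lia.
have ea : gamma ^+ a = gamma * gamma ^+ a.-1 by rewrite -exprS; congr (_ ^+ _); lia.
have ep : gamma ^+ p.+1 = gamma ^+ p * gamma by rewrite exprSr.
have x0 : 0 <= gamma ^+ p by apply: exprn_ge0; apply: ltW.
have y0 : 0 <= gamma ^+ a.-1 by apply: exprn_ge0; apply: ltW.
have gM0 : 0 <= gamma ^+ M by apply: exprn_ge0; apply: ltW.
case E: [exists tau : 'I_M, published pi M tau].
  have hC1 : P * beta <= stage_cost P beta Cd pi M.
    rewrite /stage_cost E mulr1 lerDl; by apply: sumr_ge0 => i _.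
  exists M; split => //.
    move=> tau /andP[h1 h2]; have -> : tau = M by lia.
    by rewrite /= eqxx orbT.
  have -> : (M.+1 - M = 1)%N by lia.
  rewrite SM F1 mulr0 addr0.
  have H1 := ler_wpM2l (mulr_ge0 x0 (ltW g0)) (hg a ha).
  have H2 := ler_wpM2l gM0 hC1.
  rewrite ea in H1; rewrite ep in hS; rewrite eM in H2 *.
  nra.
have npub : forall tau, (tau < M)%N -> published pi M tau = false.
  move=> tau ht; apply/negbTE; move/negbT/existsPn: E => E.
  exact: (E (Ordinal ht)).
have hC1 : Dsum Cd a <= stage_cost P beta Cd pi M.
  rewrite /stage_cost E mulr0 mulr0 add0r -sum_window; last by lia.
  rewrite big_mkcond [X in _ <= X]big_mkcond.
  apply: ler_sum_nat => i /andP[_ hi].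
  case: ifP => hpi; last by case: ifP.
  rewrite (hQ i); last by rewrite hpi hi.
  move: (npub i hi); rewrite /published => ->; exact: lexx.
exists p; split => //.
  by lia.
  move=> tau /andP[h1 h2]; rewrite /=.
  case: (ltnP tau M) => ht.
    move: (npub tau ht); rewrite /published => ->.
    by rewrite andbT; apply/orP; left; apply: hQ; rewrite h1 ht.
  have -> : tau = M by lia.
  by rewrite eqxx orbT.
have -> : (M.+1 - p = a.+1)%N by rewrite /a; lia.
rewrite SM F_rec //.
have H2 := ler_wpM2l gM0 hC1.
rewrite ep in hS *; rewrite eM in H2.
nra.
Qed.
Lemma upper_inv {R : realType} (gamma P beta c : R) Cd (n : nat) :
  0 < gamma -> 0 <= P -> 0 <= beta -> (forall i, 0 <= Cd i) -> (1 <= n)%N ->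
  c * (1 - gamma ^+ n) = F_delay gamma Cd n + gamma ^+ n.-1 * beta * P ->
  forall N, exists p, [/\ (p < N.+1)%N, (n %| p)%N, (N.+1 - p <= n)%N,
    (forall tau, queue (periodic_policy n) N.+1 tau -> (p <= tau)%N) &
    Spart gamma P beta Cd (periodic_policy n) N.+1 <=
    gamma * c * (1 - gamma ^+ p) + gamma ^+ p.+1 * F_delay gamma Cd (N.+1 - p)].
Proof.
move=> g0 hP hb hC hn hg; elim=> [|N [p [hp hdp hpn hQ hS]]].
  exists 0%N; split => //.
  rewrite expr0 subrr mulr0 add0r subn0 F1 mulr0.
  rewrite /Spart big_nat1 /stage_cost big_geq //.
  have -> : [exists tau : 'I_0, published (periodic_policy n) 0 tau] = false.
    by apply/negbTE/existsPn => -[].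
  by rewrite !(mulr0, addr0, add0r).  
set pi := periodic_policy n.
set M := N.+1 in hp hpn hQ hS *.
have SM : Spart gamma P beta Cd pi M.+1 =
   Spart gamma P beta Cd pi M + gamma ^+ M * stage_cost P beta Cd pi M.
  by rewrite /Spart big_nat_recr.
set a := (M - p)%N.
have ha : (1 <= a)%N by rewrite /a; lia.
have eM : gamma ^+ M = gamma ^+ p * gamma * gamma ^+ a.-1.
  by rewrite -exprSr -exprD; congr (_ ^+ _); rewrite /a; lia.
have ep : gamma ^+ p.+1 = gamma ^+ p * gamma by rewrite exprSr.
have x0 : 0 <= gamma ^+ p by apply: exprn_ge0; apply: ltW.
have y0 : 0 <= gamma ^+ a.-1 by apply: exprn_ge0; apply: ltW.
have gM0 : 0 <= gamma ^+ M by apply: exprn_ge0; apply: ltW.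
case/boolP: (n %| M)%N => hdM.
  have hpubQ : forall tau, published pi M tau = queue pi M tau.
    by move=> tau; rewrite /published /pi /periodic_policy hdM andbb.
  have hC1 : stage_cost P beta Cd pi M <= P * beta.
    rewrite /stage_cost big1; last by move=> i; rewrite hpubQ andbN.
    rewrite addr0; case: [exists _, _] => /=; first by rewrite mulr1.
    by rewrite mulr0 mulr0; apply: mulr_ge0.
  have han : a = n.
    have h1 : (n %| a)%N by rewrite /a dvdn_sub.
    have h2 : (n <= a)%N by apply: dvdn_leq.
    rewrite /a in h2 *; lia.
  exists M; split => //.
  - by have -> : (M.+1 - M = 1)%N by lia.
  - by move=> tau; rewrite queueS hpubQ andbN /= => /eqP ->.
  have -> : (M.+1 - M = 1)%N by lia.
  rewrite SM F1 mulr0 addr0.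
  have H1 := ler_wpM2l gM0 hC1.
  rewrite -han in hg; rewrite ep in hS *; rewrite eM in H1 *.
  have H2 : gamma ^+ p * gamma * (c * (1 - gamma ^+ a)) =
            gamma ^+ p * gamma * (F_delay gamma Cd a + gamma ^+ a.-1 * beta * P).
    by rewrite hg.
  have ea : gamma ^+ a = gamma * gamma ^+ a.-1 by rewrite -exprS; congr (_ ^+ _); lia.
  rewrite ea in H2; rewrite /a in hS.
  nra.
have hpub0 : forall tau, published pi M tau = false.
  by move=> tau; rewrite /published /pi /periodic_policy (negbTE hdM).
have hC1 : stage_cost P beta Cd pi M <= Dsum Cd a.
  rewrite /stage_cost.
  have -> : [exists tau : 'I_M, published pi M tau] = false.
    by apply/negbTE/existsPn => i; rewrite hpub0.
  rewrite mulr0 mulr0 add0r -sum_window; last by lia.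
  rewrite big_mkcond [X in _ <= X]big_mkcond.
  apply: ler_sum_nat => i /andP[_ hi].
  rewrite hpub0 andbT; case: ifP => [/hQ -> | _]; first exact: lexx.
  by case: ifP.
have han : a != n.
  apply/negP => /eqP han; move: hdM; have -> : M = (p + n)%N by rewrite /a in han; lia.
  by rewrite dvdn_addr // dvdnn.
exists p; split => //.
- by lia.
- by rewrite /a in han; lia.
- by move=> tau; rewrite queueS hpub0 andbT => /orP[/hQ //|/eqP ->]; lia.
have -> : (M.+1 - p = a.+1)%N by rewrite /a; lia.
rewrite SM F_rec //.
have H2 := ler_wpM2l gM0 hC1.
rewrite ep in hS *; rewrite eM in H2.
nra.
Qed.
Lemma lim_lb (R : realType) (g r K y : R) : 0 < g -> g < 1 ->
  (forall N, r - g ^+ N * K <= y) -> r <= y.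
Proof.
move=> g0 g1 h.
have hc : r - g ^+ N * K @[N --> \oo] --> r.
  rewrite -[X in _ --> X]subr0 -(mul0r K).
  apply: cvgB; first exact: cvg_cst.
  apply: cvgMl; apply: cvg_expr; rewrite ger0_norm //; exact: ltW.
rewrite -(cvg_lim _ hc) //; apply: limr_le; first by apply/cvg_ex; exists r.
by apply: nearW.
Qed.

Lemma series_le_of {R : realType} (f : nat -> R) (M : R) :
  (forall t, 0 <= f t) -> (forall N, \sum_(0 <= t < N) f t <= M) ->
  (\sum_(0 <= t <oo) (f t)%:E <= M%:E)%E.
Proof.
move=> h0 hM; apply: lime_le.
  apply: ereal_nondecreasing_is_cvgn; apply: ereal_nondecreasing_series.
  by move=> n _ _; rewrite lee_fin.
by apply: nearW => N /=; rewrite sumEFin lee_fin.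
Qed.

Lemma series_ge_of {R : realType} (f : nat -> R) (r g K : R) :
  0 < g -> g < 1 ->
  (forall t, 0 <= f t) -> (forall N, r - g ^+ N * K <= \sum_(0 <= t < N.+1) f t) ->
  (r%:E <= \sum_(0 <= t <oo) (f t)%:E)%E.
Proof.
move=> g0 g1 h0 hr.
have hle : forall N, ((\sum_(0 <= t < N.+1) f t)%:E <= \sum_(0 <= t <oo) (f t)%:E)%E.
  by move=> N; rewrite -sumEFin; apply: nneseries_lim_ge => n _ _; rewrite lee_fin.
move: hle; case: (\sum_(0 <= t <oo) (f t)%:E)%E => [y| |] hle.
- rewrite lee_fin; apply: (@lim_lb _ g r K y g0 g1) => N.
  by apply: le_trans (hr N) _; rewrite -lee_fin.
- exact: leey.
- by have := hle 0%N; rewrite leeNy_eq.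
Qed.
End Aux.

Theorem theorem1 (R : realType) (gamma P beta : R) (Cd : nat -> R) (nstar : nat) :
  0 < gamma -> gamma < 1 -> 0 <= P -> 0 <= beta ->
  (forall i, 0 <= Cd i) ->
  (1 <= nstar)%N ->
  (forall n, (1 <= n)%N -> objective gamma P beta Cd nstar <= objective gamma P beta Cd n) ->
  forall pi : policy,
    (total_cost gamma P beta Cd (periodic_policy nstar)
       <= total_cost gamma P beta Cd pi)%E.
Proof.
move=> g0 g1 hP hb hC hn hopt pi.
set c := objective gamma P beta Cd nstar.
have den : forall a, (1 <= a)%N -> 0 < 1 - gamma ^+ a.
  by move=> a ha; rewrite subr_gt0 exprn_ilt1 ?(ltW g0) //; lia.
have gnum : forall a, 0 <= F_delay gamma Cd a + gamma ^+ a.-1 * beta * P.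
  move=> a; apply: addr_ge0; last by apply: mulr_ge0 => //; apply: mulr_ge0 => //;
    apply: exprn_ge0; exact: ltW.
  by rewrite -(F1 gamma Cd); case: a => [|a]; [rewrite /F_delay big_geq|
     apply: F_mono => //; apply: ltW].
have hgn : forall a, (1 <= a)%N -> c * (1 - gamma ^+ a) <=
    F_delay gamma Cd a + gamma ^+ a.-1 * beta * P.
  by move=> a ha; rewrite -ler_pdivlMr ?den //; exact: hopt.
have hceq : c * (1 - gamma ^+ nstar) = F_delay gamma Cd nstar + gamma ^+ nstar.-1 * beta * P.
  by rewrite /c /objective divfK // gt_eqF // den.
have c0 : 0 <= c by rewrite /c /objective divr_ge0 // ltW // den.
have st0 : forall (q : policy) t, 0 <= gamma ^+ t * stage_cost P beta Cd q t.
  by move=> q t; apply: mulr_ge0; [apply: exprn_ge0; exact: ltW|exact: stage_ge0].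
apply: (@le_trans _ _ (gamma * c)%:E).
  apply: series_le_of => // -[|N]; first by rewrite big_geq // mulr_ge0 // ltW.
  have [p [hp hdp hpn hQ hS]] := @upper_inv _ gamma P beta c Cd nstar g0 hP hb hC hn hceq N.
  apply: (le_trans hS).
  set a := (N.+1 - p)%N.
  have Fa : F_delay gamma Cd a <= c.
    apply: (@le_trans _ _ (F_delay gamma Cd nstar)); first by apply: F_mono => //; exact: ltW.
    have y0 : 0 <= gamma ^+ nstar.-1 * beta * P.
      by apply: mulr_ge0 => //; apply: mulr_ge0 => //; apply: exprn_ge0; exact: ltW.
    have z0 : 0 <= gamma ^+ nstar by apply: exprn_ge0; exact: ltW.
    nra.
  have x0 : 0 <= gamma ^+ p by apply: exprn_ge0; exact: ltW.
  have H := ler_wpM2l (mulr_ge0 x0 (ltW g0)) Fa.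
  rewrite exprSr; nra.
apply: (@series_ge_of _ _ _ gamma (gamma * (gamma * c + beta * P))) => // N.
have [p [hp hQ hS]] := @lower_inv _ gamma P beta c Cd pi g0 hP hb hC hgn N.
apply: le_trans hS.
set a := (N.+1 - p)%N.
have ha : (1 <= a)%N by rewrite /a; lia.
have x0 : 0 <= gamma ^+ p by apply: exprn_ge0; exact: ltW.
have y0 : 0 <= gamma ^+ a.-1 by apply: exprn_ge0; exact: ltW.
have eN : gamma ^+ N.+1 = gamma ^+ p * gamma * gamma ^+ a.-1.
  by rewrite -exprSr -exprD; congr (_ ^+ _); rewrite /a; lia.
have eN' : gamma ^+ N = gamma ^+ p * gamma ^+ a.-1.
  by rewrite -exprD; congr (_ ^+ _); rewrite /a; lia.
have ea : gamma ^+ a = gamma * gamma ^+ a.-1 by rewrite -exprS; congr (_ ^+ _); lia.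
have H := ler_wpM2l (mulr_ge0 x0 (ltW g0)) (hgn a ha).
rewrite ea in H; rewrite exprSr eN'.
nra.
Qed.
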